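(* Let $\mathcal A^{\times}=\mathcal D_x\otimes\mathcal D_y-\mathcal G_x\otimes\mathcal G_y$ be the two-dimensional collocation matrix for the multiplicative kernel (see context). Then $\mathcal A^{\times}$ is strictly diagonally dominant by rows.
   Context: Fix $\gamma\in(0,1)$. For an interval $[\alpha,\beta]$ and an integer $m\ge2$ let $h=(\beta-\alpha)/m$, $x_s=\alpha+sh$ ($s\in\{0,\tfrac12,\dots,m\}$), and let $\phi_{s}$ be the piecewise quadratic Lagrange basis: for integers $0\le l\le m$, $\phi_l(x)=\frac{x-x_{l-1}}{h}\cdot\frac{2x-(x_l+x_{l-1})}{h}$ on $[x_{l-1},x_l]\cap[\alpha,\beta]$, $\phi_l(x)=\frac{x_{l+1}-x}{h}\cdot\frac{(x_{l+1}+x_l)-2x}{h}$ on $[x_l,x_{l+1}]\cap[\alpha,\beta]$, $0$ otherwise; for $l=1,\dots,m$, $\phi_{l-\frac12}(x)=\frac{4(x-x_{l-1})(x_l-x)}{h^2}$ on $[x_{l-1},x_l]$, $0$ otherwise. The associated 1D matrices are $\mathcal D=\mathrm{diag}(d_1,\dots,d_{2m-1})$ and $\mathcal G=(g_{ij})_{i,j=1}^{2m-1}$ with $d_i=\int_\alpha^\beta|x_{i/2}-y|^{-\gamma}dy$ and $g_{ij}=\int_\alpha^\beta\phi_{j/2}(y)|x_{i/2}-y|^{-\gamma}dy$. The following fact, established in earlier work, may be used: all $g_{ij}>0$ and $\mathcal D-\mathcal G$ is strictly diagonally dominant by rows. For $a<b$, $c<d$, $M_x,M_y\ge2$: $\mathcal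 D_x,\mathcal G_x$ are these matrices for $[a,b]$, $m=M_x$, and $\mathcal D_y,\mathcal G_y$ for $[c,d]$, $m=M_y$. Then $\mathcal A^{\times}=\mathcal D_x\otimes\mathcal D_y-\mathcal G_x\otimes\mathcal G_y$, which is the collocation matrix of $u\mapsto\int_\Omega\frac{u(x,y)-u(\bar x,\bar y)}{|x-\bar x|^\gamma|y-\bar y|^\gamma}d\bar xd\bar y$ on $\Omega=(a,b)\times(c,d)$ with tensor-product piecewise quadratic interpolation, rows/columns indexed by pairs $(i,j)\in\{1,\dots,2M_x-1\}\times\{1,\dots,2M_y-1\}$. *)

(* Defs.v *)
From Stdlib Require Import Reals Lra Arith.
Open Scope R_scope.

Fixpoint sumR (n : nat) (f : nat -> R) : R :=
  match n with
  | O => 0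
  | S p => sumR p f + f (S p)
  end.

(* Half-integer node x_{k/2} = alpha + k*h/2, h = (beta-alpha)/m. *)
Definition node (alpha beta : R) (m k : nat) : R :=
  alpha + INR k * ((beta - alpha) / INR m) / 2.

(* phi_l, l integer node (0 <= l <= m), piecewise quadratic Lagrange basis. *)
Definition phi_int (alpha beta : R) (m l : nat) (x : R) : R :=
  let h := (beta - alpha) / INR m in
  let xl := alpha + INR l * h in
  let xlm := xl - h in
  let xlp := xl + h in
  if Rle_dec alpha x then
    if Rle_dec x beta then
      if Rle_dec xlm x then
        if Rle_dec x xl then ((x - xlm) / h) * ((2 * x - (xl + xlm)) / h)
        else if Rle_dec x xlp then ((xlp - x) / h) * ((xlp + xl - 2 * x) / h)
        else 0
      else 0
    else 0
  else 0.

(* phi_{l-1/2}, 1 <= l <= m. *)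
Definition phi_mid (alpha beta : R) (m l : nat) (x : R) : R :=
  let h := (beta - alpha) / INR m in
  let xl := alpha + INR l * h in
  let xlm := xl - h in
  if Rle_dec xlm x then
    if Rle_dec x xl then 4 * (x - xlm) * (xl - x) / (h * h)
    else 0
  else 0.

(* phi_{j/2} for j = 1 .. 2m-1 *)
Definition phi (alpha beta : R) (m j : nat) (x : R) : R :=
  if Nat.even j then phi_int alpha beta m (Nat.div2 j) x
  else phi_mid alpha beta m (Nat.div2 (S j)) x.

Definition kern (gamma x y : R) : R := Rpower (Rabs (x - y)) (- gamma).

Definition RInt_is (f : R -> R) (a b v : R) : Prop :=
  exists pr : Riemann_integrable f a b, RiemannInt pr = v.

(* Improper (principal-value-free, symmetric-excision) integral of f over
   [a,b] with a possible singularity at c in [a,b]: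
   v = lim_{h->0+} ( int_a^{max(a,c-h)} f + int_{min(b,c+h)}^b f ). *)
Definition improper_int_at (f : R -> R) (a b c v : R) : Prop :=
  a <= c <= b /\
  forall eps, 0 < eps -> exists delta, 0 < delta /\
    forall h, 0 < h < delta ->
      exists v1 v2, RInt_is f a (Rmax a (c - h)) v1 /\
                    RInt_is f (Rmin b (c + h)) b v2 /\
                    Rabs (v1 + v2 - v) < eps.

(* d : nat -> R gives the diagonal of the 1D matrix D (indices 1..2m-1). *)
Definition is_Dvec (gamma alpha beta : R) (m : nat) (d : nat -> R) : Prop :=
  forall i, (1 <= i <= 2 * m - 1)%nat ->
    improper_int_at (fun y => kern gamma (node alpha beta m i) y)
      alpha beta (node alpha beta m i) (d i).

Definition is_Gmat (gamma alpha beta : R) (m : nat) (G : nat -> nat -> R) : Prop :=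
  forall i j, (1 <= i <= 2 * m - 1)%nat -> (1 <= j <= 2 * m - 1)%nat ->
    improper_int_at
      (fun y => phi alpha beta m j y * kern gamma (node alpha beta m i) y)
      alpha beta (node alpha beta m i) (G i j).

Definition diagm (d : nat -> R) : nat -> nat -> R :=
  fun i k => if Nat.eqb i k then d i else 0.

Definition sdd_rows (n : nat) (M : nat -> nat -> R) : Prop :=
  forall i, (1 <= i <= n)%nat ->
    sumR n (fun k => if Nat.eqb k i then 0 else Rabs (M i k)) < Rabs (M i i).

Definition kron (A B : nat -> nat -> R) : (nat * nat) -> (nat * nat) -> R :=
  fun p q => A (fst p) (fst q) * B (snd p) (snd q).

Definition sdd_rows2 (n1 n2 : nat) (M : (nat * nat) -> (nat * nat) -> R) : Prop :=
  forall i j, (1 <= i <= n1)%nat -> (1 <= j <= n2)%nat ->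
    sumR n1 (fun k => sumR n2 (fun l =>
      if andb (Nat.eqb k i) (Nat.eqb l j) then 0 else Rabs (M (i, j) (k, l))))
    < Rabs (M (i, j) (i, j)).

Definition Atimes (dx : nat -> R) (Gx : nat -> nat -> R)
                  (dy : nat -> R) (Gy : nat -> nat -> R) :=
  fun p q => kron (diagm dx) (diagm dy) p q - kron Gx Gy p q.

(* Main.v *)
Require Import Defs.
From Stdlib Require Import Reals Lra Lia Psatz Arith.
Open Scope R_scope.

Lemma sumR_ext n f g : (forall k, (1 <= k <= n)%nat -> f k = g k) -> sumR n f = sumR n g.
Proof.
  induction n; simpl; intros H; [reflexivity|].
  rewrite IHn by (intros; apply H; lia). rewrite H by lia. reflexivity.
Qed.

Lemma sumR_minus n f g : sumR n (fun k => f k - g k) = sumR n f - sumR n g.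
Proof. induction n; simpl; [lra|]. rewrite IHn; lra. Qed.

Lemma sumR_scal n c f : sumR n (fun k => c * f k) = c * sumR n f.
Proof. induction n; simpl; [lra|]. rewrite IHn; lra. Qed.

Lemma sumR_single n i c : (1 <= i <= n)%nat ->
  sumR n (fun k => if Nat.eqb k i then c else 0) = c.
Proof.
  induction n; simpl; intros H; [lia|].
  destruct (Nat.eq_dec i (S n)) as [->|Hne].
  - rewrite Nat.eqb_refl.
    rewrite (sumR_ext n _ (fun _ => 0)).
    + clear. induction n; simpl; lra.
    + intros k Hk. destruct (Nat.eqb_spec k (S n)); [lia|reflexivity].
  - rewrite IHn by lia. replace (match i with 0%nat => false | S m' => n =? m' end) with (Nat.eqb (S n) i) by reflexivity. rewrite (proj2 (Nat.eqb_neq _ _)) by lia. lra.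
Qed.

Lemma sumR_drop n i f : (1 <= i <= n)%nat ->
  sumR n (fun k => if Nat.eqb k i then 0 else f k) = sumR n f - f i.
Proof.
  intros H. rewrite <- (sumR_single n i (f i) H), <- sumR_minus.
  apply sumR_ext; intros k _. destruct (Nat.eqb_spec k i); subst; lra.
Qed.

Lemma sumR_nonneg n f : (forall k, (1 <= k <= n)%nat -> 0 <= f k) -> 0 <= sumR n f.
Proof.
  induction n; simpl; intros H; [lra|].
  assert (0 <= sumR n f) by (apply IHn; intros; apply H; lia).
  assert (0 <= f (S n)) by (apply H; lia). lra.
Qed.

Lemma kern_pos g x y : 0 < kern g x y.
Proof. unfold kern, Rpower. apply exp_pos. Qed.

Lemma phi_le1 alpha beta m j x : alpha < beta -> (1 <= m)%nat ->
  phi alpha beta m j x <= 1.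
Proof.
  intros Hab Hm.
  assert (Hm' : 0 < INR m) by (apply lt_0_INR; lia).
  set (h := (beta - alpha) / INR m).
  assert (Hh : 0 < h) by (unfold h; apply Rdiv_lt_0_compat; lra).
  unfold phi, phi_int, phi_mid; fold h.
  destruct (Nat.even j).
  - set (xl := alpha + INR (Nat.div2 j) * h).
    repeat match goal with |- context [Rle_dec ?p ?q] => destruct (Rle_dec p q) end;
      try lra.
    + set (t := (x - (xl - h)) / h).
      assert (Ht0 : 0 <= t) by (unfold t; apply Rmult_le_pos; [lra|left; apply Rinv_0_lt_compat; lra]).
      assert (Ht1 : t <= 1).
      { unfold t. apply (Rmult_le_reg_r h); [lra|]. field_simplify; lra. }
      replace ((2 * x - (xl + (xl - h))) / h) with (2 * t - 1)
        by (unfold t; field; lra). nra.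
    + set (t := (xl + h - x) / h).
      assert (Ht0 : 0 <= t) by (unfold t; apply Rmult_le_pos; [lra|left; apply Rinv_0_lt_compat; lra]).
      assert (Ht1 : t <= 1).
      { unfold t. apply (Rmult_le_reg_r h); [lra|]. field_simplify; lra. }
      replace ((xl + h + xl - 2 * x) / h) with (2 * t - 1)
        by (unfold t; field; lra). nra.
  - set (xl := alpha + INR (Nat.div2 (S j)) * h).
    repeat match goal with |- context [Rle_dec ?p ?q] => destruct (Rle_dec p q) end;
      try lra.
    set (t := (x - (xl - h)) / h).
    replace (4 * (x - (xl - h)) * (xl - x) / (h * h)) with (4 * t * (1 - t))
      by (unfold t; field; lra).
    clearbody t. pose proof (pow2_ge_0 (2*t-1)). nra.
Qed.

Lemma d_ge_g gamma alpha beta m d G i : alpha < beta -> (2 <= m)%nat ->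
  is_Dvec gamma alpha beta m d -> is_Gmat gamma alpha beta m G ->
  (1 <= i <= 2 * m - 1)%nat -> G i i <= d i.
Proof.
  intros Hab Hm Hd HG Hi.
  destruct (Rle_dec (G i i) (d i)) as [|Hn]; [assumption|exfalso].
  set (eps := (G i i - d i) / 2).
  assert (He : 0 < eps) by (unfold eps; lra).
  destruct (Hd i Hi) as [Hc HdI]. destruct (HG i i Hi Hi) as [_ HGI].
  destruct (HdI eps He) as [d1 [Hd1 Hd1']].
  destruct (HGI eps He) as [d2 [Hd2 Hd2']].
  set (h := Rmin d1 d2 / 2).
  assert (0 < Rmin d1 d2) by (apply Rmin_glb_lt; lra).
  assert (Hh1 : 0 < h < d1) by (unfold h; pose proof (Rmin_l d1 d2); lra).
  assert (Hh2 : 0 < h < d2) by (unfold h; pose proof (Rmin_r d1 d2); lra).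
  destruct (Hd1' h Hh1) as [v1 [v2 [[p1 E1] [[p2 E2] Hv]]]].
  destruct (Hd2' h Hh2) as [w1 [w2 [[q1 F1] [[q2 F2] Hw]]]].
  assert (Hle : forall x, phi alpha beta m i x * kern gamma (node alpha beta m i) x
                          <= kern gamma (node alpha beta m i) x).
  { intros x. pose proof (phi_le1 alpha beta m i x Hab ltac:(lia)).
    pose proof (kern_pos gamma (node alpha beta m i) x). nra. }
  assert (w1 <= v1).
  { rewrite <- E1, <- F1. apply RiemannInt_P19; [apply Rmax_l|]. intros; apply Hle. }
  assert (w2 <= v2).
  { rewrite <- E2, <- F2. apply RiemannInt_P19; [apply Rmin_l|]. intros; apply Hle. }
  apply Rabs_def2 in Hv. apply Rabs_def2 in Hw. unfold eps in *. lra.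
Qed.

Lemma row_facts n d G i : sdd_rows n (fun i k => diagm d i k - G i k) ->
  (forall k, (1 <= k <= n)%nat -> 0 < G i k) -> (1 <= i <= n)%nat ->
  G i i <= d i -> 0 < sumR n (G i) < d i /\ G i i <= sumR n (G i).
Proof.
  intros Hs Hp Hi Hgd.
  specialize (Hs i Hi). simpl in Hs.
  unfold diagm at 2 in Hs. rewrite Nat.eqb_refl in Hs.
  rewrite (sumR_ext n _ (fun k => if Nat.eqb k i then 0 else G i k)) in Hs.
  2:{ intros k Hk. unfold diagm. destruct (Nat.eqb_spec k i); [reflexivity|].
      destruct (Nat.eqb_spec i k); [lia|].
      rewrite Rabs_left; [lra|]. specialize (Hp k Hk); lra. }
  rewrite sumR_drop in Hs by assumption.
  rewrite Rabs_right in Hs by lra.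
  pose proof (Hp i Hi).
  assert (0 <= sumR n (fun k => if Nat.eqb k i then 0 else G i k)).
  { apply sumR_nonneg; intros k Hk. destruct (Nat.eqb k i); [lra|].
    specialize (Hp k Hk); lra. }
  rewrite sumR_drop in H0 by assumption. lra.
Qed.

Theorem lemma3p8
  (gamma a b c d : R) (Mx My : nat)
  (dx : nat -> R) (Gx : nat -> nat -> R)
  (dy : nat -> R) (Gy : nat -> nat -> R)
  (Hgamma : 0 < gamma < 1) (Hab : a < b) (Hcd : c < d)
  (HMx : (2 <= Mx)%nat) (HMy : (2 <= My)%nat)
  (Hdx : is_Dvec gamma a b Mx dx) (HGx : is_Gmat gamma a b Mx Gx)
  (Hdy : is_Dvec gamma c d My dy) (HGy : is_Gmat gamma c d My Gy)
  (* fact established in earlier work, for both 1D matrices *)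
  (HGxpos : forall i j, (1 <= i <= 2 * Mx - 1)%nat -> (1 <= j <= 2 * Mx - 1)%nat ->
              0 < Gx i j)
  (HGypos : forall i j, (1 <= i <= 2 * My - 1)%nat -> (1 <= j <= 2 * My - 1)%nat ->
              0 < Gy i j)
  (HsddX : sdd_rows (2 * Mx - 1) (fun i k => diagm dx i k - Gx i k))
  (HsddY : sdd_rows (2 * My - 1) (fun i k => diagm dy i k - Gy i k)) :
  sdd_rows2 (2 * Mx - 1) (2 * My - 1) (Atimes dx Gx dy Gy).
Proof.
  intros i j Hi Hj.
  set (nx := (2 * Mx - 1)%nat) in *. set (ny := (2 * My - 1)%nat) in *.
  destruct (row_facts nx dx Gx i HsddX (fun k => HGxpos i k Hi) Hi
              (d_ge_g _ _ _ _ _ _ _ Hab HMx Hdx HGx Hi)) as [[Sx1 Sx2] Sx3].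
  destruct (row_facts ny dy Gy j HsddY (fun k => HGypos j k Hj) Hj
              (d_ge_g _ _ _ _ _ _ _ Hcd HMy Hdy HGy Hj)) as [[Sy1 Sy2] Sy3].
  set (Sx := sumR nx (Gx i)) in *. set (Sy := sumR ny (Gy j)) in *.
  pose proof (HGxpos i i Hi Hi). pose proof (HGypos j j Hj Hj).
  unfold Atimes, kron, diagm; simpl. rewrite !Nat.eqb_refl.
  rewrite (sumR_ext nx _ (fun k => sumR ny (fun l => Gx i k * Gy j l)
            - (if Nat.eqb k i then Gx i i * Gy j j else 0))).
  2:{ intros k Hk.
      rewrite (sumR_ext ny _ (fun l => Gx i k * Gy j l
            - (if Nat.eqb k i then (if Nat.eqb l j then Gx i i * Gy j j else 0) else 0))).
      - rewrite sumR_minus. destruct (Nat.eqb_spec k i).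
        + rewrite sumR_single by assumption. reflexivity.
        + f_equal. clear. induction ny; simpl; lra.
      - intros l Hl. pose proof (HGxpos i k Hi Hk). pose proof (HGypos j l Hj Hl).
        destruct (Nat.eqb_spec k i); destruct (Nat.eqb_spec l j); subst; simpl;
        try (destruct (Nat.eqb_spec i k); [lia|]);
        try (destruct (Nat.eqb_spec j l); [lia|]);
        try rewrite Nat.eqb_refl; simpl; try lra;
        rewrite Rabs_left; nra. }
  rewrite sumR_minus, sumR_single by assumption.
  rewrite (sumR_ext nx _ (fun k => Gx i k * Sy)) by (intros; apply sumR_scal).
  rewrite (sumR_ext nx (fun k => Gx i k * Sy) (fun k => Sy * Gx i k))
    by (intros; ring).
  rewrite sumR_scal. fold Sx.
  rewrite Rabs_right by nra. nra.
Qed.
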